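(* Let $N\ge 2$ and let $p$ be a path of length $N$ with steps $s_0,\dots,s_{N-1}$. Then $p$ is a perfect star path if and only if there is an integer constant $S$ with $|S|=L>1$ such that $s_n=S$ for all $n\in\{0,1,\dots,N-1\}$.
   Context: A path of length $N$ is a vector $p=(p_0,\dots,p_{N-1})$ whose entries are the integers $0,\dots,N-1$ in some order; indices are cyclic, $p_N=p_0$. The path differences are $d_n=p_{n+1}-p_n$, and the steps are $s_n=d_n$ if $|d_n|<N/2$; $s_n=N/2$ if $|d_n|=N/2$; $s_n=d_n-N$ if $d_n>N/2$; $s_n=d_n+N$ if $d_n<-N/2$. The edge lengths of $p$ are $|s_0|,\dots,|s_{N-1}|$. The path is a star path if $|s_n|\ne 1$ for all $n$ (equivalently, for every $n$, $(p_{n+1}-p_n)\bmod N\notin\{1,N-1\}$, where $x\bmod N$ is the remainder in $\{0,\dots,N-1\}$). A perfect star path is a star path all of whose edge lengths $|s_n|$ are equal. *)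

(* Defs.v *)
From mathcomp Require Import all_boot all_order all_algebra.
Set Implicit Arguments. Unset Strict Implicit. Unset Printing Implicit Defensive.
Import Order.TTheory GRing.Theory Num.Theory.
Local Open Scope ring_scope.

Definition is_path (N : nat) (p : seq nat) : Prop := perm_eq p (iota 0 N).

Definition pent (N : nat) (p : seq nat) (n : nat) : int := (nth 0%N p (n %% N))%:Z.

Definition pdiff (N : nat) (p : seq nat) (n : nat) : int := pent N p n.+1 - pent N p n.

(* Step from a difference d, with comparisons to N/2 done as 2|d| vs N. *)
Definition step_of (N : nat) (d : int) : int :=
  if `|d| * 2 < N%:Z then d
  else if `|d| * 2 == N%:Z then (N %/ 2)%N%:Z
  else if d * 2 > N%:Z then d - N%:Z
  else d + N%:Z.

Definition pstep (N : nat) (p : seq nat) (n : nat) : int := step_of N (pdiff N p n).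

Definition edge_len (N : nat) (p : seq nat) (n : nat) : int := `|pstep N p n|.

Definition star_path (N : nat) (p : seq nat) : Prop :=
  forall n, (n < N)%N -> edge_len N p n != 1.

Definition perfect_star_path (N : nat) (p : seq nat) : Prop :=
  star_path N p /\
  forall n m, (n < N)%N -> (m < N)%N -> edge_len N p n = edge_len N p m.

(* Main.v *)
Require Import Defs.
From mathcomp Require Import all_boot all_order all_algebra zify.
Import Order.TTheory GRing.Theory Num.Theory.
Set Implicit Arguments. Unset Strict Implicit.
Local Open Scope ring_scope.

Lemma step_ofP (N : nat) (d : int) : (0 < N)%N -> `|d| < N%:Z ->
  [/\ step_of N d = d \/ step_of N d = d + N%:Z \/ step_of N d = d - N%:Z,
      - (N%:Z) < step_of N d * 2, step_of N d * 2 <= N%:Z &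
      (d != 0 -> step_of N d != 0)].
Proof.
move=> N0 dN; rewrite /step_of.
case: ifP => h1; first by split; lia.
case: ifP => h2; first by split; lia.
case: ifP => h3; split; lia.
Qed.

Lemma pent_bound N p n : (0 < N)%N -> is_path N p -> 0 <= pent N p n < N%:Z.
Proof.
move=> N0 hp; rewrite /pent.
have sz : size p = N by rewrite (perm_size hp) size_iota.
have : nth 0%N p (n %% N) \in p by rewrite mem_nth // sz ltn_pmod.
rewrite (perm_mem hp) mem_iota => /andP[_]; lia.
Qed.

Lemma pent_inj N p i j : (0 < N)%N -> is_path N p -> pent N p i = pent N p j -> (i %% N = j %% N)%N.
Proof.
move=> N0 hp; rewrite /pent => /eqP; rewrite eqz_nat => /eqP.
have sz : size p = N by rewrite (perm_size hp) size_iota.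
have u : uniq p by rewrite (perm_uniq hp) iota_uniq.
move/eqP; rewrite nth_uniq // ?sz ?ltn_pmod //; exact/eqP.
Qed.

Lemma pdiff_bound N p n : (0 < N)%N -> is_path N p -> `|pdiff N p n| < N%:Z.
Proof.
move=> N0 hp; rewrite /pdiff.
move: (pent_bound n.+1 N0 hp) (pent_bound n N0 hp); lia.
Qed.

Theorem mainTheorem3 (N : nat) (p : seq nat) :
  (2 <= N)%N -> is_path N p ->
  (perfect_star_path N p <->
   exists S : int, 1 < `|S| /\ forall n, (n < N)%N -> pstep N p n = S).
Proof.
move=> N2 hp; have N0 : (0 < N)%N by lia.
split; last first.
  case=> S [S1 hS]; split.
    by move=> n nN; rewrite /edge_len hS //; apply/eqP; lia.
  by move=> n m nN mN; rewrite /edge_len !hS.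
case=> hstar heq.
have sP n := step_ofP N0 (pdiff_bound n N0 hp).
have d0 : pdiff N p 0 != 0.
  apply/negP => /eqP h.
  have : pent N p 1 = pent N p 0 by rewrite /pdiff in h; lia.
  move/(pent_inj N0 hp); rewrite mod0n modn_small //.
have s0 : pstep N p 0 != 0.
  by case: (sP 0%N) => _ _ _; apply.
have L1 : 1 < `|pstep N p 0|.
  have := hstar 0%N N0; rewrite /edge_len; move: s0; lia.
exists (pstep N p 0); split => //.
have N3 : (3 <= N)%N.
  case: (sP 0%N) => _ h1 h2 _; move: L1 h1 h2; rewrite /pstep; lia.
elim=> [//|n IH] nN.
have IH' := IH (ltnW nN).
have habs : `|pstep N p n.+1| = `|pstep N p n|.
  by have := heq n.+1 n nN (ltnW nN); rewrite /edge_len.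
case: (eqVneq (pstep N p n.+1) (pstep N p n)) => [->//|hne].
exfalso.
have hsum : pstep N p n.+1 + pstep N p n = 0 by move: habs hne; lia.
have hx : pent N p n.+2 = pent N p n.
  case: (sP n) => e1 _ _ _; case: (sP n.+1) => e2 _ _ _.
  move: (pent_bound n.+2 N0 hp) (pent_bound n N0 hp) hsum e1 e2.
  rewrite /pstep /pdiff; lia.
move/(pent_inj N0 hp): hx => /eqP.
by rewrite -[n.+2]addn2 -{2}[n]addn0 eqn_modDl modn_small // mod0n.
Qed.
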